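(* For $n\ge 5$, every two bases of $\Theta_n$ intersect, every two bases of $\Theta_n^\star$ intersect, and $f(\Theta_n)\le n-2$.
   Context: For $n\ge 1$, $\Theta_n$ is the matroid on ground set $X\cup Y$ with $X=\{x_1,\dots,x_n\}$, $Y=\{y_1,\dots,y_n\}$ disjoint, whose bases are the $n$-subsets $B\subseteq X\cup Y$ with $|B\cap X|\le 2$ and $B\neq(Y\setminus\{y_i\})\cup\{x_i\}$ for all $i$. For a matroid $M$, the distance between bases $B,B'$ is $|B\triangle B'|$; the Borsuk number $f(M)$ is the minimum number of parts in a partition of the set of bases in which each part has diameter strictly smaller than the diameter of the set of all bases ($f(M)=+\infty$ if $M$ has one basis). *)

(* Defs.v *)
From mathcomp Require Import all_boot all_order.
Set Implicit Arguments. Unset Strict Implicit. Unset Printing Implicit Defensive.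

Section Matroids.
Variable T : finType.

Definition bdist (B B' : {set T}) : nat := #|(B :\: B') :|: (B' :\: B)|.

(* diameter of a family of sets (0 for the empty family) *)
Definition diam (F : {set {set T}}) : nat :=
  \max_(B in F) \max_(B' in F) bdist B B'.

Definition dual_bases (Bs : {set {set T}}) : {set {set T}} :=
  [set ~: B | B in Bs].

Definition pairwise_intersecting (Bs : {set {set T}}) : Prop :=
  forall B B', B \in Bs -> B' \in Bs -> B :&: B' != set0.

Definition borsuk_partition (Bs : {set {set T}}) (P : {set {set {set T}}}) : Prop :=
  partition P Bs /\ forall A, A \in P -> diam A < diam Bs.

(* f(M) <= k  (with f(M) = +oo meaning no such partition exists) *)
Definition borsuk_le (Bs : {set {set T}}) (k : nat) : Prop :=
  exists P, borsuk_partition Bs P /\ #|P| <= k.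
End Matroids.

(* Ground set X ∪ Y encoded as 'I_n + 'I_n: x_i = inl i, y_i = inr i. *)
Definition thX n : {set 'I_n + 'I_n} := [set inl i | i : 'I_n].
Definition thY n : {set 'I_n + 'I_n} := [set inr i | i : 'I_n].

Definition theta_bases n : {set {set 'I_n + 'I_n}} :=
  [set B : {set 'I_n + 'I_n} |
     [&& #|B| == n, #|B :&: thX n| <= 2 &
         [forall i : 'I_n, B != inl i |: (thY n :\ inr i)]]].

(* Main.v *)
Require Import Defs.
From mathcomp Require Import all_boot all_order.
From mathcomp Require Import zify.
Set Implicit Arguments. Unset Strict Implicit. Unset Printing Implicit Defensive.

Section Th.
Variable n : nat.
Local Notation T := ('I_n + 'I_n)%type.
Local Notation Bs := (theta_bases n).

Lemma inX i : inl i \in thX n. Proof. by apply/imsetP; exists i. Qed.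
Lemma inY i : inr i \in thY n. Proof. by apply/imsetP; exists i. Qed.
Lemma ninX i : inr i \in thX n = false.
Proof. by apply/negbTE/negP => /imsetP[j _]. Qed.
Lemma ninY i : inl i \in thY n = false.
Proof. by apply/negbTE/negP => /imsetP[j _]. Qed.

Lemma thXY : thX n :&: thY n = set0.
Proof.
apply/setP => -[i|i]; by rewrite !inE ?ninX ?ninY ?andbF.
Qed.

Lemma card_thY : #|thY n| = n.
Proof. by rewrite card_imset ?card_ord //; exact: inr_inj. Qed.

Lemma sub_XY (A : {set T}) : A \subset (A :&: thX n) :|: thY n.
Proof.
apply/subsetP => -[i|i] Ai; rewrite !inE Ai ?inX ?inY ?orbT //.
Qed.

Lemma card_le_XY (A : {set T}) : #|A| <= #|A :&: thX n| + n.
Proof.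
apply: leq_trans (subset_leq_card (sub_XY A)) _.
by rewrite -[X in _ <= _ + X]card_thY; exact: (leq_card_setU _ _).1.
Qed.

Lemma baseP B : B \in Bs ->
  [/\ #|B| = n, #|B :&: thX n| <= 2 & forall i, B != inl i |: (thY n :\ inr i)].
Proof. by rewrite inE => /and3P[/eqP -> -> /forallP H]. Qed.

Lemma union_bound B B' :
  #|B :|: B'| + #|(B :&: thX n) :&: (B' :&: thX n)|
    <= #|B :&: thX n| + #|B' :&: thX n| + n.
Proof.
have h := card_le_XY (B :|: B').
rewrite setIUl in h.
have := cardsUI (B :&: thX n) (B' :&: thX n).
lia.
Qed.

Lemma part1 : 5 <= n -> pairwise_intersecting Bs.
Proof.
move=> hn B B' hB hB'; apply/negP => /eqP h0.
have := union_bound B B'. have := cardsUI B B'. rewrite h0 cards0.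
case/baseP: hB => -> ? _; case/baseP: hB' => -> ? _. lia.
Qed.

Lemma part2 : 5 <= n -> pairwise_intersecting (dual_bases Bs).
Proof.
move=> hn C C' /imsetP[B hB ->] /imsetP[B' hB' ->]; apply/negP => /eqP h0.
rewrite -setCU in h0.
have hU : B :|: B' = setT by rewrite -(setCK (B :|: B')) h0 setC0.
have := union_bound B B'. rewrite hU cardsT card_sum card_ord.
case/baseP: hB => _ ? _; case/baseP: hB' => _ ? _. lia.
Qed.


Definition pX (B : {set T}) (k : nat) : bool :=
  [exists j : 'I_n, (val j == k) && (inl j \in B)].
Definition fc (B : {set T}) : nat := minn (find (pX B) (iota 0 n)) (n - 3).

Lemma fc_small B (hn : 5 <= n) : fc B < n - 2.
Proof. rewrite /fc; lia. Qed.

Lemma fc_low B : fc B < n - 3 -> 3 <= n ->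
  exists j : 'I_n, (val j = fc B) /\ (inl j \in B).
Proof.
move=> hlt h3.
have e : find (pX B) (iota 0 n) = fc B by move: hlt; rewrite /fc; lia.
have hasB : has (pX B) (iota 0 n) by rewrite has_find size_iota; lia.
have := nth_find 0 hasB; rewrite nth_iota; last by rewrite e; lia.
rewrite add0n e.
by case/existsP => j /andP[/eqP hj hjB]; exists j.
Qed.

Lemma fc_high B (j : 'I_n) : n - 3 <= fc B -> inl j \in B -> n - 3 <= j.
Proof.
move=> hge hj; rewrite leqNgt; apply/negP => hlt.
have hf : j < find (pX B) (iota 0 n) by move: hge; rewrite /fc; lia.
have := before_find 0 hf; rewrite nth_iota ?add0n; last by lia.
by move/negbT/existsPn/(_ j); rewrite eqxx hj.
Qed.

Lemma card_S : #|[set j : 'I_n | n - 3 <= j]| <= 3.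
Proof.
have le : n - 3 <= n by lia.
have hsub : [set widen_ord le k | k : 'I_(n-3)] \subset ~: [set j : 'I_n | n - 3 <= j].
  apply/subsetP => z /imsetP[k _ ->]; rewrite !inE /= -ltnNge; exact: ltn_ord.
have hc : #|[set widen_ord le k | k : 'I_(n-3)]| = n - 3.
  rewrite card_imset ?card_ord // => x y /(congr1 val) /= /val_inj //.
have := subset_leq_card hsub; have := cardsC [set j : 'I_n | n - 3 <= j].
rewrite card_ord hc; lia.
Qed.

Lemma same_col B B' : 5 <= n -> fc B = fc B' ->
  #|B :&: thX n| = 2 -> #|B' :&: thX n| = 2 ->
  0 < #|(B :&: thX n) :&: (B' :&: thX n)|.
Proof.
move=> hn e hB hB'.
case: (ltnP (fc B) (n-3)) => hlt.
  have [j [hj hjB]] := fc_low hlt (ltnW (ltnW hn)).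
  rewrite e in hlt.
  have [j' [hj' hjB']] := fc_low hlt (ltnW (ltnW hn)).
  have ejj : j = j' by apply/val_inj; rewrite /= hj hj' e.
  subst j'; apply/card_gt0P; exists (inl j); by rewrite !inE hjB hjB' inX.
have hlt' : n - 3 <= fc B' by rewrite -e.
set S := [set j : 'I_n | n - 3 <= j].
have sub1 : forall C, n - 3 <= fc C -> C :&: thX n \subset inl @: S.
  move=> C hC; apply/subsetP => z; rewrite inE => /andP[hz /imsetP[j _ ez]].
  subst z; apply/imsetP; exists j => //; rewrite inE; exact: fc_high hC hz.
have hU : #|(B :&: thX n) :|: (B' :&: thX n)| <= 3.
  apply: leq_trans (subset_leq_card (setUSS (sub1 _ hlt) (sub1 _ hlt'))) _.
  by rewrite setUid; apply: leq_trans (leq_imset_card _ _) card_S.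
have := cardsUI (B :&: thX n) (B' :&: thX n). lia.
Qed.


Lemma bdist_eq (B B' : {set T}) : #|B| = n -> #|B'| = n ->
  bdist B B' = 2 * (n - #|B :&: B'|).
Proof.
move=> hB hB'; rewrite /bdist.
have h0 : (B :\: B') :&: (B' :\: B) = set0.
  apply/setP => z; rewrite !inE; by case: (z \in B); case: (z \in B').
have := cardsUI (B :\: B') (B' :\: B); rewrite h0 cards0 !cardsD (setIC B') hB hB'.
have := subset_leq_card (subsetIl B B'); rewrite hB; lia.
Qed.

Lemma part_small B B' : 5 <= n -> B \in Bs -> B' \in Bs -> fc B = fc B' ->
  bdist B B' <= 6.
Proof.
move=> hn hB hB' e.
have := same_col hn e.
have := union_bound B B'; have := cardsUI B B'.
case/baseP: hB => h1 k1 _; case/baseP: hB' => h2 k2 _.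
rewrite (bdist_eq h1 h2) h1 h2.
case: (boolP ((#|B :&: thX n| == 2) && (#|B' :&: thX n| == 2))).
  case/andP => /eqP a /eqP b h3 h4 h5; have := h5 a b; lia.
move=> hk h3 h4 _; move: hk; rewrite negb_and => /orP[] /eqP ?; lia.
Qed.

Lemma WZ (W Z : {set T}) : W \subset thX n -> Z \subset thY n ->
  (W :|: Z) :&: thX n = W.
Proof.
move=> hW hZ; rewrite setIUl (setIidPl hW).
have : Z :&: thX n \subset thY n :&: thX n := setSI _ hZ.
by rewrite [thY n :&: _]setIC thXY subset0 => /eqP ->; rewrite setU0.
Qed.

Definition mkB (a b : 'I_n) : {set T} :=
  [set inl a; inl b] :|: (thY n :\: [set inr a; inr b]).

Lemma mkB_X a b : mkB a b :&: thX n = [set inl a; inl b].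
Proof.
apply: WZ; last exact: subsetDl.
by apply/subsetP => z; rewrite !inE => /orP[] /eqP ->; rewrite inX.
Qed.

Lemma mkB_base a b : a != b -> mkB a b \in Bs.
Proof.
move=> ab; rewrite inE mkB_X cards2 (inj_eq (@inl_inj _ _)) ab /=.
apply/andP; split.
  rewrite /mkB cardsU.
  have -> : [set inl a; inl b] :&: (thY n :\: [set inr a; inr b]) = set0.
    apply/setP => z; rewrite !inE; apply/negbTE; apply/negP => /andP[/orP[] /eqP -> ].
      by rewrite ninY.
    by rewrite ninY.
  rewrite cards0 cardsD card_thY.
  have -> : thY n :&: [set inr a; inr b] = [set inr a; inr b].
    apply/setIidPr/subsetP => z; rewrite !inE => /orP[] /eqP ->; exact: inY.
  rewrite !cards2 !(inj_eq (@inr_inj _ _)) !(inj_eq (@inl_inj _ _)) ab /=.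
  have : 2 <= n.
    have := ltn_ord a; have := ltn_ord b; have : (a : nat) != b by []. lia.
  move=> ?; apply/eqP; lia.
apply/forallP => i; apply/negP => /eqP e.
have := mkB_X a b; rewrite e WZ.
- move/(congr1 (fun S : {set T} => #|S|)); rewrite cards1 cards2.
  by rewrite (inj_eq (@inl_inj _ _)) ab.
- by rewrite sub1set inX.
- exact: subD1set.
Qed.


Lemma diam_big : 5 <= n -> 8 <= diam Bs.
Proof.
move=> hn.
have h0 : 0 < n by lia. have h1 : 1 < n by lia.
have h2 : 2 < n by lia. have h3 : 3 < n by lia.
pose a0 := Ordinal h0. pose a1 := Ordinal h1.
pose a2 := Ordinal h2. pose a3 := Ordinal h3.
have hB1 : mkB a0 a1 \in Bs by apply: mkB_base.
have hB2 : mkB a2 a3 \in Bs by apply: mkB_base.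
have hD : [set inl a0; inl a1; inr a2; inr a3] \subset mkB a0 a1 :\: mkB a2 a3.
  apply/subsetP => z; rewrite !inE => /orP[/orP[/orP[/eqP->|/eqP->]|/eqP->]|/eqP->];
  by rewrite ?ninY ?inY ?eqxx /= ?(inj_eq (@inl_inj _ _)) ?(inj_eq (@inr_inj _ _)).
have hc : #|[set inl a0; inl a1; inr a2; inr a3]| = 4.
  rewrite -!setUA !cardsU1 cards1 !inE.  by rewrite ?(inj_eq (@inl_inj _ _)) ?(inj_eq (@inr_inj _ _)).
have := subset_leq_card hD; rewrite hc cardsD.
case/baseP: (hB1) => e1 _ _; case/baseP: (hB2) => e2 _ _.
move=> hle.
apply: leq_trans (_ : bdist (mkB a0 a1) (mkB a2 a3) <= _).
  rewrite (bdist_eq e1 e2). have := subset_leq_card (subsetIl (mkB a0 a1) (mkB a2 a3)). rewrite e1. move: hle; rewrite e1. move=> A _; move: A; move: (n - _) => k; lia.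
rewrite /diam.
apply: leq_trans (_ : _ <= \max_(B' in Bs) bdist (mkB a0 a1) B') _.
  by apply: (bigmax_sup (mkB a2 a3)).

by apply: (bigmax_sup (mkB a0 a1)).

Qed.

End Th.

Theorem proposition6p1 (n : nat) (hn : 5 <= n) :
  pairwise_intersecting (theta_bases n) /\
  pairwise_intersecting (dual_bases (theta_bases n)) /\
  borsuk_le (theta_bases n) (n - 2).
Proof.
split; first exact: part1.
split; first exact: part2.
pose col := fun B : {set 'I_n + 'I_n} => (Ordinal (fc_small B hn) : 'I_(n-2)).
exists (preim_partition col (theta_bases n)); split; first split.
- exact: preim_partitionP.
- move=> A /imsetP[B hB ->].
  have hd := diam_big hn; suff hA : diam [set y in theta_bases n | col B == col y] <= 6.
    apply: (@leq_ltn_trans 6) => //; exact: ltnW hd.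
  rewrite /diam.
  apply/bigmax_leqP => C; rewrite inE => /andP[hC eC].
  apply/bigmax_leqP => C'; rewrite inE => /andP[hC' eC'].
  apply: part_small => //.
  by move/eqP/(congr1 val): eC => /= <-; move/eqP/(congr1 val): eC' => /= <-.
- apply: leq_trans (_ : _ <= #|[set [set y in theta_bases n | c == col y] | c : 'I_(n-2)]|) _.
    apply: subset_leq_card; apply/subsetP => A /imsetP[B hB ->].
    by apply/imsetP; exists (col B).
  by apply: leq_trans (leq_imset_card _ _) _; rewrite card_ord.
Qed.
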